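(* If $\Gamma_G$ is population monotonic, then $G$ has no subgraph isomorphic to the complete graph $K_4$ (equivalently, no induced subgraph isomorphic to $K_4$).
   Context: $G=(V,E;w)$ is a finite simple graph with edge weights $w:E\to\mathbb{R}$, $w_e>0$ for all $e\in E$. The matching game on $G$ is the cooperative game $\Gamma_G=(N,\gamma)$ with player set $N=V$ and, for $S\subseteq N$, $\gamma(S)$ equal to the maximum weight of a matching in the induced subgraph $G[S]$ (so $\gamma(\emptyset)=0$). A population monotonic allocation scheme (PMAS) is a family $(\boldsymbol{x}_S)_{\emptyset\neq S\subseteq N}$ with $\boldsymbol{x}_S=(x_{S,i})_{i\in S}\in\mathbb{R}^S$ such that (efficiency) $\sum_{i\in S}x_{S,i}=\gamma(S)$ for every nonempty $S\subseteq N$, and (monotonicity) $x_{S,i}\le x_{T,i}$ whenever $\emptyset\ne S\subseteq T\subseteq N$ and $i\in S$. $\Gamma_G$ is called population monotonic if it admits a PMAS. *)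

(* Defs.v *)
From HB Require Import structures.
From mathcomp Require Import all_boot all_order all_algebra.
From mathcomp Require Import reals.
Set Implicit Arguments. Unset Strict Implicit. Unset Printing Implicit Defensive.
Import Order.TTheory GRing.Theory Num.Theory.
Local Open Scope ring_scope.

Definition simple_graph (V : finType) (e : rel V) : Prop :=
  (forall u v, e u v = e v u) /\ (forall u, ~~ e u u).

(* Edge weights w : V -> V -> R; only values on edges matter.  They are
   required symmetric (a weight of the unordered edge) and positive on edges. *)
Definition edge_weights (R : realType) (V : finType) (e : rel V) (w : V -> V -> R) : Prop :=
  (forall u v, w u v = w v u) /\ (forall u v, e u v -> 0 < w u v).

(* A matching in G[S]: a set of oriented edges (u,v) with u,v in S, e u v,
   and any two distinct members vertex-disjoint (in particular an edge cannot
   appear with both orientations). *)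
Definition is_matching (V : finType) (e : rel V) (S : {set V}) (M : {set V * V}) : bool :=
  [forall p in M, [&& p.1 \in S, p.2 \in S & e p.1 p.2]] &&
  [forall p in M, forall q in M, (p != q) ==>
     [&& p.1 != q.1, p.1 != q.2, p.2 != q.1 & p.2 != q.2]].

Definition matching_weight (R : realType) (V : finType) (w : V -> V -> R)
  (M : {set V * V}) : R := \sum_(p in M) w p.1 p.2.

Definition gamma (R : realType) (V : finType) (e : rel V) (w : V -> V -> R)
  (S : {set V}) : R :=
  \big[Num.max/0]_(M : {set V * V} | is_matching e S M) matching_weight w M.

Definition is_PMAS (R : realType) (V : finType) (e : rel V) (w : V -> V -> R)
  (x : {set V} -> V -> R) : Prop :=
  (forall S : {set V}, S != set0 -> \sum_(i in S) x S i = gamma e w S) /\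
  (forall (S T : {set V}) (i : V), S != set0 -> S \subset T -> i \in S ->
     x S i <= x T i).

Definition population_monotonic (R : realType) (V : finType) (e : rel V)
  (w : V -> V -> R) : Prop := exists x, is_PMAS e w x.

Definition has_K4 (V : finType) (e : rel V) : Prop :=
  exists a b c d : V,
    [/\ [&& a != b, a != c, a != d, b != c, b != d & c != d],
        [&& e a b, e a c & e a d] & [&& e b c, e b d & e c d]].

(* Main.v *)
Require Import Defs.
From mathcomp Require Import all_boot all_order all_algebra.
From mathcomp Require Import reals.
From mathcomp Require Import lra.
Set Implicit Arguments. Unset Strict Implicit. Unset Printing Implicit Defensive.
Import Order.TTheory GRing.Theory Num.Theory.
Local Open Scope ring_scope.

Section G.
Variables (R : realType) (V : finType) (e : rel V) (w : V -> V -> R).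

Lemma gamma_ge0 S : 0 <= gamma e w S.
Proof. exact: bigmax_ge_id. Qed.

Lemma gamma_pair u v : e u v -> w u v <= gamma e w [set u; v].
Proof.
move=> huv.
have hm : is_matching e [set u; v] [set (u, v)].
  apply/andP; split; apply/forallP => p; apply/implyP; rewrite inE => /eqP -> /=.
    by rewrite !inE !eqxx orbT huv.
  by apply/forallP => q; apply/implyP; rewrite inE => /eqP ->; rewrite eqxx.
apply: le_trans (le_bigmax_cond _ _ hm).
by rewrite /matching_weight big_set1.
Qed.

Lemma gamma_triple u v t : simple_graph e -> edge_weights e w ->
  u != v -> u != t -> v != t -> e u v -> e u t -> e v t ->
  gamma e w [set u; v; t] <= Num.max (w u v) (Num.max (w u t) (w v t)).
Proof.
move=> [esym eirr] [wsym wpos] uv ut vt euv eut evt.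
have h0 : 0 <= Num.max (w u v) (Num.max (w u t) (w v t)).
  by rewrite le_max (ltW (wpos _ _ euv)).
apply: bigmax_le => // M /andP [/forallP H1 /forallP H2].
case: (set_0Vmem M) => [->|[p pM]].
  by rewrite /matching_weight big_set0.
have -> : M = [set p].
  apply/setP => q; rewrite inE; apply/idP/idP; last by move/eqP ->.
  move=> qM; apply/negPn/negP => qp.
  have := implyP (forallP (implyP (H2 q) qM) p) pM.
  rewrite qp /= => /and4P [n1 n2 n3 n4].
  have /and3P [p1 p2 ep] := implyP (H1 p) pM.
  have /and3P [q1 q2 eq] := implyP (H1 q) qM.
  have pn : p.1 != p.2 by apply: contraTneq ep => ->; exact: eirr.
  have qn : q.1 != q.2 by apply: contraTneq eq => ->; exact: eirr.
  move: p1 p2 q1 q2 qn pn n1 n2 n3 n4; clear qp ep eq; case: p {pM} => p1 p2; case: q {qM} => q1 q2 /=.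
  rewrite !inE -!orbA.
  by case/or3P => /eqP ->; case/or3P => /eqP ->; case/or3P => /eqP ->; case/or3P => /eqP ->; rewrite ?eqxx.
rewrite /matching_weight big_set1.
have /and3P [p1 p2 ep] := implyP (H1 p) pM.
have pn : p.1 != p.2 by apply: contraTneq ep => ->; exact: eirr.
move: p1 p2 pn; case: p {pM H1 H2 ep} => p1 p2 /=; rewrite !inE -!orbA.
by case/or3P => /eqP ->; case/or3P => /eqP ->; rewrite ?eqxx // => _;
   rewrite ?(wsym v u) ?(wsym t u) ?(wsym t v) !le_max lexx ?orbT.
Qed.


Lemma max3_cases (g p q r : R) : g <= Num.max p (Num.max q r) -> [\/ g <= p, g <= q | g <= r].
Proof. by rewrite !le_max => /orP [h|/orP [h|h]]; [apply: Or31|apply: Or32|apply: Or33]. Qed.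

Lemma sum2 (F : V -> R) u v : u != v -> \sum_(i in [set u; v]) F i = F u + F v.
Proof. move=> uv; rewrite big_setU1; last by rewrite inE. by rewrite big_set1. Qed.

Lemma sum3 (F : V -> R) u v t : u != v -> u != t -> v != t ->
  \sum_(i in [set u; v; t]) F i = F u + F v + F t.
Proof.
move=> uv ut vt.
rewrite setUC big_setU1 /=; first by rewrite sum2 // addrC.
by rewrite !inE negb_or !(eq_sym t) ut vt.
Qed.

Lemma sub_pt (u v : V) (T : {set V}) : u \in T -> v \in T -> [set u; v] \subset T.
Proof. by move=> uT vT; apply/subsetP => z; rewrite !inE => /orP [] /eqP ->. Qed.

Lemma nonneg (x : {set V} -> V -> R) (S : {set V}) (u : V) : is_PMAS e w x -> u \in S -> 0 <= x S u.
Proof.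
move=> [eff mono] uS.
have h1 : [set u] != set0 by apply/set0Pn; exists u; rewrite inE.
apply: le_trans (mono [set u] S u h1 _ _); last by rewrite inE.
  by have := eff _ h1; rewrite big_set1 => ->; apply: gamma_ge0.
by rewrite sub1set.
Qed.

Lemma pair_facts (x : {set V} -> V -> R) u v : simple_graph e -> edge_weights e w -> is_PMAS e w x ->
  u != v -> e u v ->
  [/\ w u v <= x [set u; v] u + x [set u; v] v, 0 <= x [set u; v] u & 0 <= x [set u; v] v].
Proof.
move=> G W P uv euv; have [eff _] := P.
have ne : [set u; v] != set0 by apply/set0Pn; exists u; rewrite !inE eqxx.
split; try (apply: (nonneg P); by rewrite !inE eqxx ?orbT).
by rewrite -sum2 // eff //; apply: gamma_pair.
Qed.

Lemma triple_facts (x : {set V} -> V -> R) u v t : simple_graph e -> edge_weights e w -> is_PMAS e w x ->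
  u != v -> u != t -> v != t -> e u v -> e u t -> e v t ->
  let T := [set u; v; t] in
  [/\ [\/ x T u + x T v + x T t <= w u v, x T u + x T v + x T t <= w u t
         | x T u + x T v + x T t <= w v t],
      x [set u; v] u <= x T u /\ x [set u; v] v <= x T v,
      x [set u; t] u <= x T u /\ x [set u; t] t <= x T t &
      x [set v; t] v <= x T v /\ x [set v; t] t <= x T t].
Proof.
move=> G W P uv ut vt euv eut evt T; have [eff mono] := P.
have neT : T != set0 by apply/set0Pn; exists u; rewrite !inE eqxx.
have hT : x T u + x T v + x T t = gamma e w T by rewrite -sum3 // eff.
have inT : [/\ u \in T, v \in T & t \in T] by rewrite !inE !eqxx ?orbT.
case: inT => iu iv it.
have M : forall p q (z : V), z \in [set p; q] -> p \in T -> q \in T -> x [set p; q] z <= x T z.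
  move=> p q z zin pT qT; apply: mono => //; first by apply/set0Pn; exists z.
  exact: sub_pt.
split.
- rewrite hT; case: (max3_cases (gamma_triple G W uv ut vt euv eut evt)) => h;
  [apply: Or31|apply: Or32|apply: Or33]; exact: h.
- by split; apply: M; rewrite ?inE ?eqxx ?orbT.
- by split; apply: M; rewrite ?inE ?eqxx ?orbT.
- by split; apply: M; rewrite ?inE ?eqxx ?orbT.
Qed.

Lemma tri (a b c d f g tu tv tz wuv wuz wvz : R) :
  wuv <= a + b -> wuz <= c + d -> wvz <= f + g ->
  0 <= a -> 0 <= b -> 0 <= c -> 0 <= d -> 0 <= f -> 0 <= g ->
  [\/ tu + tv + tz <= wuv, tu + tv + tz <= wuz | tu + tv + tz <= wvz] ->
  a <= tu -> b <= tv -> c <= tu -> d <= tz -> f <= tv -> g <= tz ->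
  [\/ [/\ d <= 0, g <= 0, c + b <= wuv & a + f <= wuv],
      [/\ b <= 0, f <= 0, a + d <= wuz & c + g <= wuz] |
      [/\ a <= 0, c <= 0, b + g <= wvz & f + d <= wvz]].
Proof.
move=> h1 h2 h3 n1 n2 n3 n4 n5 n6 [] h m1 m2 m3 m4 m5 m6; [apply: Or31|apply: Or32|apply: Or33];
  split; lra.
Qed.

Lemma dbl (p q w0 : R) : w0 <= p + q -> 0 < w0 -> p <= 0 -> q <= 0 -> False.
Proof. move=> *; lra. Qed.

Lemma star (r s t o w1 w2 : R) : w1 <= r + s -> s <= 0 -> w2 <= o + t -> o <= 0 ->
  r + t <= w2 -> 0 < w1 -> False.
Proof. move=> *; lra. Qed.

Ltac close_star := match goal with
  | H: is_true (Order.le (GRing.add ?r ?t) ?w2), H0 : is_true (Order.lt GRing.zero ?w1) |- _ =>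
    match goal with
    | H1: is_true (Order.le w1 (GRing.add r ?s')), H2 : is_true (Order.le ?s' GRing.zero) |- _ =>
      match goal with
      | H3: is_true (Order.le w2 (GRing.add ?o t)), H4 : is_true (Order.le ?o GRing.zero) |- _ => exact: (star H1 H2 H3 H4 H H0)
      | H3: is_true (Order.le w2 (GRing.add t ?o)), H4 : is_true (Order.le ?o GRing.zero) |- _ => rewrite addrC in H3; exact: (star H1 H2 H3 H4 H H0)
      end
    | H1: is_true (Order.le w1 (GRing.add ?s' r)), H2 : is_true (Order.le ?s' GRing.zero) |- _ => rewrite addrC in H1;
      match goal with
      | H3: is_true (Order.le w2 (GRing.add ?o t)), H4 : is_true (Order.le ?o GRing.zero) |- _ => exact: (star H1 H2 H3 H4 H H0)
      | H3: is_true (Order.le w2 (GRing.add t ?o)), H4 : is_true (Order.le ?o GRing.zero) |- _ => rewrite addrC in H3; exact: (star H1 H2 H3 H4 H H0)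
      end
    end
  end.

Ltac close_dbl := match goal with
  | H: is_true (Order.le ?w0 (GRing.add ?p ?q)), H0: is_true (Order.lt GRing.zero ?w0),
    H1 : is_true (Order.le ?p GRing.zero), H2 : is_true (Order.le ?q GRing.zero) |- _ => exact: (dbl H H0 H1 H2)
  end.

Lemma arith (pab_a pab_b pac_a pac_c pad_a pad_d pbc_b pbc_c pbd_b pbd_d pcd_c pcd_d wab wac wad wbc wbd wcd : R) :
  0 < wab ->
  0 < wac ->
  0 < wad ->
  0 < wbc ->
  0 < wbd ->
  0 < wcd ->
  wab <= pab_a + pab_b ->
  wac <= pac_a + pac_c ->
  wad <= pad_a + pad_d ->
  wbc <= pbc_b + pbc_c ->
  wbd <= pbd_b + pbd_d ->
  wcd <= pcd_c + pcd_d ->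
  [\/ [/\ pac_c <= 0, pbc_c <= 0, pac_a + pab_b <= wab & pab_a + pbc_b <= wab], [/\ pab_b <= 0, pbc_b <= 0, pab_a + pac_c <= wac & pac_a + pbc_c <= wac] | [/\ pab_a <= 0, pac_a <= 0, pab_b + pbc_c <= wbc & pbc_b + pac_c <= wbc]] ->
  [\/ [/\ pad_d <= 0, pbd_d <= 0, pad_a + pab_b <= wab & pab_a + pbd_b <= wab], [/\ pab_b <= 0, pbd_b <= 0, pab_a + pad_d <= wad & pad_a + pbd_d <= wad] | [/\ pab_a <= 0, pad_a <= 0, pab_b + pbd_d <= wbd & pbd_b + pad_d <= wbd]] ->
  [\/ [/\ pad_d <= 0, pcd_d <= 0, pad_a + pac_c <= wac & pac_a + pcd_c <= wac], [/\ pac_c <= 0, pcd_c <= 0, pac_a + pad_d <= wad & pad_a + pcd_d <= wad] | [/\ pac_a <= 0, pad_a <= 0, pac_c + pcd_d <= wcd & pcd_c + pad_d <= wcd]] ->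
  [\/ [/\ pbd_d <= 0, pcd_d <= 0, pbd_b + pbc_c <= wbc & pbc_b + pcd_c <= wbc], [/\ pbc_c <= 0, pcd_c <= 0, pbc_b + pbd_d <= wbd & pbd_b + pcd_d <= wbd] | [/\ pbc_b <= 0, pbd_b <= 0, pbc_c + pcd_d <= wcd & pcd_c + pbd_d <= wcd]] -> False.
Proof.
move=> H0 H1 H2 H3 H4 H5 H6 H7 H8 H9 H10 H11 H12 H13 H14 H15.
case: H12 => -[] ? ? ? ?; case: H13 => -[] ? ? ? ?; case: H14 => -[] ? ? ? ?; case: H15 => -[] ? ? ? ?; first [close_dbl | close_star | lra].
Qed.

Lemma noK4 (x : {set V} -> V -> R) a b c d : simple_graph e -> edge_weights e w -> is_PMAS e w x ->
  a != b -> a != c -> a != d -> b != c -> b != d -> c != d ->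
  e a b -> e a c -> e a d -> e b c -> e b d -> e c d -> False.
Proof.
move=> G W P ab ac ad bc bd cd eab eac ead ebc ebd ecd.
have [_ wpos] := W.
have [p1 p2 p3] := pair_facts G W P ab eab.
have [p4 p5 p6] := pair_facts G W P ac eac.
have [p7 p8 p9] := pair_facts G W P ad ead.
have [p10 p11 p12] := pair_facts G W P bc ebc.
have [p13 p14 p15] := pair_facts G W P bd ebd.
have [p16 p17 p18] := pair_facts G W P cd ecd.
have [t1 [m1 m2] [m3 m4] [m5 m6]] := triple_facts G W P ab ac bc eab eac ebc.
have [t2 [n1 n2] [n3 n4] [n5 n6]] := triple_facts G W P ab ad bd eab ead ebd.
have [t3 [o1 o2] [o3 o4] [o5 o6]] := triple_facts G W P ac ad cd eac ead ecd.
have [t4 [q1 q2] [q3 q4] [q5 q6]] := triple_facts G W P bc bd cd ebc ebd ecd.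
exact: (arith (wpos _ _ eab) (wpos _ _ eac) (wpos _ _ ead) (wpos _ _ ebc) (wpos _ _ ebd) (wpos _ _ ecd)
  p1 p4 p7 p10 p13 p16
  (tri p1 p4 p10 p2 p3 p5 p6 p11 p12 t1 m1 m2 m3 m4 m5 m6)
  (tri p1 p7 p13 p2 p3 p8 p9 p14 p15 t2 n1 n2 n3 n4 n5 n6)
  (tri p4 p7 p16 p5 p6 p8 p9 p17 p18 t3 o1 o2 o3 o4 o5 o6)
  (tri p10 p13 p16 p11 p12 p14 p15 p17 p18 t4 q1 q2 q3 q4 q5 q6)).
Qed.

End G.

Theorem mainTheorem9 (R : realType) (V : finType) (e : rel V) (w : V -> V -> R) :
  simple_graph e -> edge_weights e w ->
  population_monotonic e w -> ~ has_K4 e.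
Proof.
move=> G W [x P] [a [b [c [d [/and5P [ab ac ad bc /andP [bd cd]] /and3P [eab eac ead] /and3P [ebc ebd ecd]]]]]].
exact: (noK4 G W P ab ac ad bc bd cd eab eac ead ebc ebd ecd).
Qed.
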